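(* Let $0<u<v<1$. Suppose $\mathcal E^c_u(z)=\mathcal E^c_v(z)=\mathcal E_u(z)$ for some $z\in\mathbb R$. Then $\mathcal E^c_u=\mathcal E^c_v$ on $(-\infty,z]$.
   Context: Let $\mu,\nu$ be probability measures on $\mathbb R$ with finite first moments and $\mu\le_{cx}\nu$. Put $P_\eta(k)=\int(k-x)^+\eta(dx)$. Let $G$ be any quantile function of $\mu$. For $u\in(0,1)$ let $\mu_u(A)=\mu(A\cap(-\infty,G(u)))+\big(u-\mu((-\infty,G(u)))\big)\delta_{G(u)}(A)$ and $\mathcal E_u=P_\nu-P_{\mu_u}$. $f^c$ denotes the largest convex function lying below $f$. *)

(* Defs.v *)
From HB Require Import structures.
From mathcomp Require Import all_boot all_order all_algebra.
From mathcomp Require Import all_classical all_reals all_analysis.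
Set Implicit Arguments. Unset Strict Implicit. Unset Printing Implicit Defensive.
Import Order.TTheory GRing.Theory Num.Theory.
Local Open Scope classical_set_scope.
Local Open Scope ring_scope.

Section defs.
Variable R : realType.

Definition cvxR (f : R -> R) : Prop :=
  convex_function (E := R^o) [set: R^o] f.

Definition first_moment (eta : probability R R) : Prop :=
  eta.-integrable [set: R] (fun x => (x : R)%:E).

Definition cx_le (mu nu : probability R R) : Prop :=
  forall f : R -> R, cvxR f ->
    (\int[mu]_x (f x)%:E <= \int[nu]_x (f x)%:E)%E.

Definition quantile_fun (mu : probability R R) (G : R -> R) : Prop :=
  forall u : R, 0 < u < 1 ->
    (mu `]-oo, G u[%classic <= u%:E <= mu `]-oo, G u]%classic)%E.

Definition Pput (eta : {measure set R -> \bar R}) (k : R) : \bar R :=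
  (\int[eta]_x (Num.max (k - x) 0)%:E)%E.

(* P_{mu_u}(k), where
   mu_u = mu restricted to (-oo, G u) + (u - mu((-oo,G u))) delta_{G u};
   the integral against mu_u is written out as the integral over the
   restriction plus the contribution of the atom at G u. *)
Definition Pmu_u (mu : probability R R) (G : R -> R) (u k : R) : \bar R :=
  ((\int[mu]_(x in `]-oo, G u[%classic) (Num.max (k - x) 0)%:E)
   + ((u - fine (mu `]-oo, G u[%classic)) * Num.max (k - G u) 0)%:E)%E.

(* E_u = P_nu - P_{mu_u}  (real valued: both are finite under the
   finite first moment hypothesis) *)
Definition Eu (mu nu : probability R R) (G : R -> R) (u : R) (k : R) : R :=
  fine (Pput nu k) - fine (Pmu_u mu G u k).

Definition conv_env (f : R -> R) (x : R) : \bar R :=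
  ereal_sup [set (g x)%:E | g in [set g : R -> R | cvxR g /\ (forall y, g y <= f y)]].

End defs.

(* Main.v *)
Require Import Defs.
From HB Require Import structures.
From mathcomp Require Import all_boot all_order all_algebra.
From mathcomp Require Import all_classical all_reals all_analysis.
From mathcomp Require Import lra ring measurable_realfun.
Import Order.TTheory GRing.Theory Num.Theory.
Local Open Scope classical_set_scope.
Local Open Scope ring_scope.

Section cvx.
Variable R : realType.

Definition chord (f : R -> R) := forall a b c : R, a < b -> b < c ->
  (c - a) * f b <= (c - b) * f a + (b - a) * f c.

Lemma cvx_chord f : cvxR f -> chord f.
Proof.
move=> H a b c ab bc.
have ca : 0 < c - a by lra.
have t0 : 0 <= (c - b) / (c - a) by apply: divr_ge0; lra.
have t1 : (c - b) / (c - a) <= 1 by rewrite ler_pdivrMr //; lra.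
have := H (Itv01 t0 t1) a c (mem_set I) (mem_set I).
rewrite /=. 
set t := Itv01 t0 t1.
have E1 : forall x y : convex_lmodType R^o, (conv t x y : R) = (c - b) / (c - a) * x + (1 - (c - b) / (c - a)) * y.
  by move=> x y.
have E2 : forall x y : R^o, (conv t x y : R) = (c - b) / (c - a) * x + (1 - (c - b) / (c - a)) * y.
  by move=> x y.
rewrite E1 E2.
have -> : (c - b) / (c - a) * a + (1 - (c - b) / (c - a)) * c = b.
  by field; lra.
move=> Hf.
have := ler_wpM2l (ltW ca) Hf.
have -> : (c - a) * ((c - b) / (c - a) * f a + (1 - (c - b) / (c - a)) * f c) = (c - b) * f a + (b - a) * f c.
  by field; lra.
by [].
Qed.

Lemma chord_mid f x y p : chord f -> x < y -> 0 < p < 1 ->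
  f (p * x + (1 - p) * y) <= p * f x + (1 - p) * f y.
Proof.
move=> H xy /andP[p0 p1].
have yx : 0 < y - x by lra.
have := H x (p * x + (1 - p) * y) y _ _.
have h1 : x < p * x + (1 - p) * y by nra.
have h2 : p * x + (1 - p) * y < y by nra.
move=> /(_ h1 h2) Hc.
rewrite -(ler_pM2l yx).
apply: (le_trans Hc); rewrite le_eqVlt; apply/orP; left; apply/eqP; ring.
Qed.

Lemma chord_cvx f : chord f -> cvxR f.
Proof.
move=> H t x y _ _.
have E1 : forall x y : convex_lmodType R^o, (conv t x y : R) = t%:num * x + (1 - t%:num) * y.
  by move=> x0 y0.
have E2 : forall x y : R^o, (conv t x y : R) = t%:num * x + (1 - t%:num) * y.
  by move=> x0 y0.
rewrite E1 E2.
have t0 : 0 <= t%:num by [].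
have t1 : t%:num <= 1 by [].
set p := t%:num in t0 t1 *.
have [->|p0] := eqVneq p 0; first by rewrite !mul0r !add0r subr0 !mul1r.
have [->|p1] := eqVneq p 1; first by rewrite !mul1r subrr !mul0r !addr0.
have pa : 0 < p by rewrite lt_neqAle eq_sym p0 t0.
have pb : p < 1 by rewrite lt_neqAle p1 t1.
have p01 : 0 < p < 1 by rewrite pa pb.
have [xy|yx|->] := ltgtP x y.
- exact: chord_mid.
- have q01 : 0 < 1 - p < 1 by lra.
  have := @chord_mid f y x (1 - p) H yx q01.
  have -> : (1 - p) * y + (1 - (1 - p)) * x = p * x + (1 - p) * y by ring.
  have -> : (1 - p) * f y + (1 - (1 - p)) * f x = p * f x + (1 - p) * f y by ring.
  by [].
- have -> : p * y + (1 - p) * y = y by ring.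
  have -> : p * f y + (1 - p) * f y = f y by ring.
  by [].
Qed.

Lemma chord_max f g : chord f -> chord g -> chord (fun x => Num.max (f x) (g x)).
Proof.
move=> Hf Hg a b c ab bc.
have cb : 0 <= c - b by lra.
have ba : 0 <= b - a by lra.
have mx1 (u w : R) : u <= Num.max u w by case: (lerP u w) => h; lra.
have mx2 (u w : R) : w <= Num.max u w by case: (lerP u w) => h; lra.
have Ma1 := ler_wpM2l cb (mx1 (f a) (g a)).
have Ma2 := ler_wpM2l cb (mx2 (f a) (g a)).
have Mc1 := ler_wpM2l ba (mx1 (f c) (g c)).
have Mc2 := ler_wpM2l ba (mx2 (f c) (g c)).
have := Hf a b c ab bc; have := Hg a b c ab bc.
case: (lerP (f b) (g b)) => _ H1 H2; lra.
Qed.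

Lemma chord_glue f1 f2 z : chord f1 -> chord f2 -> f1 z = f2 z ->
  (forall y, y <= z -> f2 y <= f1 y) ->
  chord (fun y => if y <= z then f1 y else f2 y).
Proof.
move=> H1 H2 e12 le21 a b c ab bc.
have [cz|zc] := leP c z.
  have az : a <= z by lra.
  have bz : b <= z by lra.
  by rewrite ?az ?bz ?cz; exact: H1.
have [za|az] := ltP z a.
  have az2 : (a <= z) = false by apply/negbTE; rewrite -ltNge.
  have bz : (b <= z) = false by apply/negbTE; rewrite -ltNge; lra.
  have cz : (c <= z) = false by apply/negbTE; rewrite -ltNge; lra.
  by rewrite ?az2 ?bz ?cz; exact: H2.

have [bz|zb] := ltP b z.
  rewrite (ltW bz).
  have P1 := ler_wpM2l (_ : 0 <= c - b) (H1 a b z ab bz).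
  have P2 := ler_wpM2l (_ : 0 <= b - a) (H2 b z c bz zc).
  have P3 := ler_wpM2l (_ : 0 <= (b - a) * (c - z)) (le21 b (ltW bz)).
  have zb0 : 0 < z - b by lra.
  rewrite -(ler_pM2l zb0).
  have Q1 := P1 _; have Q2 := P2 _; have Q3 := P3 _.
  have : 0 <= c - b by lra. move/Q1 => {}Q1.
  have : 0 <= b - a by lra. move/Q2 => {}Q2.
  have : 0 <= (b - a) * (c - z) by apply: mulr_ge0; lra. move/Q3 => {}Q3.
  rewrite e12 in Q1.
  nra.
have hb : (if b <= z then f1 b else f2 b) = f2 b.
  by case: ifP => // bz; have -> : b = z by apply/eqP; rewrite eq_le bz zb.
rewrite hb.
have := H2 a b c ab bc.
have := ler_wpM2l (_ : 0 <= c - b) (le21 a az).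
move=> P; have : 0 <= c - b by lra. move/P; lra.
Qed.

Lemma chord_subc (f : R -> R) (e : R) : chord f -> chord (fun y => f y - e).
Proof.
move=> H a b c ab bc; have := H a b c ab bc.
have -> : (c - a) * (f b - e) = (c - a) * f b - (c - a) * e by ring.
have -> : (c - b) * (f a - e) + (b - a) * (f c - e) = (c - b) * f a + (b - a) * f c - (c - a) * e by ring.
lra.
Qed.

Lemma conv_env_le (f : R -> R) (x : R) : (conv_env f x <= (f x)%:E)%E.
Proof.
apply/ereal_supP => _ [g [gc gle] <-]; by rewrite lee_fin.
Qed.

Lemma key (f1 f2 : R -> R) z x : (forall y, y <= z -> f1 y = f2 y) ->
  conv_env f2 z = (f1 z)%:E -> x <= z -> (conv_env f1 x <= conv_env f2 x)%E.
Proof.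
move=> e12 H xz.
apply/ereal_supP => _ [g [gc gle] <-].
apply/lee_subgt0Pr => e e0.
have : ((g z - e)%:E < conv_env f2 z)%E.
  by rewrite H lte_fin; have := gle z; lra.
move/ereal_sup_gt => [_ [k [kc kle] <-]]; rewrite lte_fin => kz.
pose h y := if y <= z then Num.max (g y - e) (k y) else k y.
have mx2 (u w : R) : w <= Num.max u w by case: (lerP u w) => hh; lra.
have hM : cvxR h /\ (forall y, h y <= f2 y).
  split.
    apply: chord_cvx; apply: chord_glue.
    - by apply: chord_max; [apply: chord_subc; exact: cvx_chord|exact: cvx_chord].
    - exact: cvx_chord.
    - by case: (lerP (g z - e) (k z)) => hh; lra.
    - by move=> y _; exact: mx2.
  move=> y; rewrite /h; case: ifP => yz; last exact: kle.
  have := gle y; have := kle y; rewrite (e12 y yz).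
  by case: (lerP (g y - e) (k y)) => hh; lra.
apply: (@le_trans _ _ (h x)%:E); last first.
  by apply: ereal_sup_ubound; exists h.
rewrite /h xz -EFinB lee_fin.
by case: (lerP (g x - e) (k x)) => hh; lra.
Qed.
End cvx.
Section meas.
Variable R : realType.
Variable mu : probability R R.

Definition fk (k : R) : R -> \bar R := fun x : R => (Num.max (k - x) 0)%:E.

Lemma mfk k (D : set R) : measurable_fun D (fk k).
Proof.
apply/measurable_EFinP; apply: measurable_maxr.
  exact: measurable_funB.
exact: measurable_cst.
Qed.

Lemma fk_ge0 k x : (0 <= fk k x)%E.
Proof. by rewrite lee_fin; case: (lerP (k - x) 0) => h; lra. Qed.

Lemma int_fk k : first_moment mu -> mu.-integrable setT (fk k).
Proof.
move=> fm.
have ig : mu.-integrable setT (fun x => (EFin \o cst k) x - (x%:E))%E.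
  apply: integrableB => //; exact: finite_measure_integrable_cst.
apply: le_integrable ig => //; first exact: mfk.
move=> x _; rewrite /fk /= lee_fin.
case: (lerP (k - x) 0) => h.
  by rewrite normr0.
by [].
Qed.

Lemma fin_int k A : measurable A -> first_moment mu ->
  (\int[mu]_(x in A) fk k x)%E \is a fin_num.
Proof.
move=> mA fm; apply: integrable_fin_num => //.
apply: (integrableS measurableT) => //; exact: int_fk.
Qed.


Lemma muE (A : set R) : measurable A -> mu A = (fine (mu A))%:E.
Proof. by move=> mA; rewrite fineK // fin_num_measure. Qed.

Lemma maxmono (a y z : R) : y <= z -> Num.max (y - a) 0 <= Num.max (z - a) 0.
Proof. by move=> yz; case: (lerP (y - a) 0); case: (lerP (z - a) 0) => h1 h2; lra. Qed.

Lemma max_ge0 (t : R) : 0 <= Num.max t 0.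
Proof. by case: (lerP t 0) => h; lra. Qed.

Lemma G_mono (G : R -> R) u v : quantile_fun mu G -> 0 < u -> u < v -> v < 1 ->
  G u <= G v.
Proof.
move=> hq u0 uv v1.
rewrite leNgt; apply/negP => ba.
have /andP[qu1 qu2] := hq u ltac:(apply/andP; split; lra).
have /andP[qv1 qv2] := hq v ltac:(apply/andP; split; lra).
have : (mu `]-oo, G v]%classic <= mu `]-oo, G u[%classic)%E.
  apply: le_measure; rewrite ?inE; try exact: measurable_itv.
  by move=> x /=; rewrite !in_itv /= => h; apply: (le_lt_trans h).
move=> h.
have := le_trans qv2 (le_trans h qu1); rewrite lee_fin; lra.
Qed.

Lemma decomp (G : R -> R) u v : first_moment mu -> quantile_fun mu G ->
  0 < u -> u < v -> v < 1 ->
  exists Q : R -> R, (forall k, 0 <= Q k) /\ (forall y z, y <= z -> Q y <= Q z) /\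
   forall k, fine (Pmu_u mu G v k) = fine (Pmu_u mu G u k) + Q k.
Proof.
move=> fm hq u0 uv v1.
have ab := @G_mono G u v hq u0 uv v1.
have Pdef w k : fine (Pmu_u mu G w k) =
   fine (\int[mu]_(x in `]-oo, G w[%classic) fk k x)%E +
   (w - fine (mu `]-oo, G w[%classic)) * Num.max (k - G w) 0.
  rewrite /Pmu_u fineD //; apply: fin_int => //; exact: measurable_itv.
move: ab; rewrite le_eqVlt => /orP[/eqP ab|ab].
  exists (fun k => (v - u) * Num.max (k - G u) 0); split; [|split].
  - move=> k; apply: mulr_ge0; [lra|exact: max_ge0].
  - move=> y z yz; apply: ler_wpM2l; [lra|exact: (@maxmono _ y z yz)].
  - by move=> k; rewrite !Pdef -ab; ring.
set a := G u in ab Pdef *; set b := G v in ab Pdef *.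
set mA := fine (mu `]-oo, a[%classic).
set p := fine (mu [set a]).
set mB := fine (mu `]-oo, b[%classic).
have mab : measurable (`]a, b[%classic : set R) by exact: measurable_itv.
pose I k := fine (\int[mu]_(x in `]a, b[%classic) fk k x)%E.
have hu : u <= mA + p.
  have /andP[_ qu2] := hq u ltac:(apply/andP; split; lra).
  have E : (`]-oo, a]%classic : set R) = `]-oo, a[%classic `|` [set a].
    apply/seteqP; split => x /=; rewrite !in_itv /=.
      by rewrite le_eqVlt => /orP[/eqP ->|->]; [right|left].
    by move=> [/ltW //|->].
  rewrite E measureU in qu2; first last.
  - by apply/seteqP; split => x //= [] /[swap] ->; rewrite in_itv /= ltxx.
  - exact: measurable_set1.
  - exact: measurable_itv.
  have : (u%:E <= (mA + p)%:E)%E.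
    rewrite EFinD /mA /p !fineK //; apply: fin_num_measure; [exact: measurable_set1|exact: measurable_itv].
  by rewrite lee_fin.
have hv : mB <= v.
  have /andP[qv1 _] := hq v ltac:(apply/andP; split; lra).
  have : ((mB)%:E <= v%:E)%E.
    rewrite /mB fineK //; apply: fin_num_measure; exact: measurable_itv.
  by rewrite lee_fin.
exists (fun k => (p - (u - mA)) * Num.max (k - a) 0 + I k + (v - mB) * Num.max (k - b) 0).
split; [|split].
- move=> k; apply: addr_ge0; [apply: addr_ge0|].
  + apply: mulr_ge0; [lra|exact: max_ge0].
  + apply: fine_ge0; apply: integral_ge0 => x _; exact: fk_ge0.
  + apply: mulr_ge0; [lra|exact: max_ge0].
- move=> y z yz; apply: lerD; [apply: lerD|].
  + apply: ler_wpM2l; [lra|exact: (@maxmono _ y z yz)].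
  + apply: fine_le; try exact: fin_int.
    apply: ge0_le_integral => //; try exact: mfk.
      by move=> x _; exact: fk_ge0.
    by move=> x _; rewrite /fk lee_fin; exact: (@maxmono x y z yz).
  + apply: ler_wpM2l; [lra|exact: (@maxmono _ y z yz)].
move=> k.
rewrite !Pdef -/a -/b -/mA -/mB.
have -> : (`]-oo, b[%classic : set R) = `]-oo, a[%classic `|` ([set a] `|` `]a, b[%classic).
  apply/seteqP; split => x /=; rewrite !in_itv /=.
    move=> xb; have [xa|ax|->] := ltgtP x a; [by left|right; right|by right; left].
    by rewrite xb.
  move=> [xa|[->|/andP[_ //]]]; lra.
rewrite ge0_integral_setU //; first last.
- rewrite disj_set2E; apply/eqP/seteqP; split => x //= [].
  by rewrite !in_itv /= => xa [xa2|/andP[ax _]]; [rewrite xa2 ltxx in xa|lra].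
- by move=> x _; exact: fk_ge0.
- exact: mfk.
- apply: measurableU => //; exact: measurable_set1.
rewrite ge0_integral_setU //; first last.
- rewrite disj_set2E; apply/eqP/seteqP; split => x //= [].
  by rewrite !in_itv /= => -> /andP[]; rewrite ltxx.
- by move=> x _; exact: fk_ge0.
- exact: mfk.
have -> : (\int[mu]_(x in [set a]) fk k x = \int[mu]_(x in [set a]) (cst (fk k a)) x)%E.
  by apply: eq_integral => x; rewrite inE => ->.
rewrite integral_cst; last exact: measurable_set1.
have fa : (mu [set a]) \is a fin_num by apply: fin_num_measure; exact: measurable_set1.
have fm1 : ((cst (fk k a) a) * mu [set a])%E \is a fin_num by rewrite fin_numM.
rewrite fineD; first last.
- rewrite fin_numD; apply/andP; split => //; exact: fin_int.
- apply: fin_int => //; exact: measurable_itv.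
rewrite (@fineD _ (fk k a * mu [set a])%E); first last.
- exact: fin_int.
- by rewrite fin_numM.
rewrite fineM //= -/p.
rewrite /I /=; ring.
Qed.

End meas.

Theorem lemma4p5 (R : realType) (mu nu : probability R R) (G : R -> R)
    (u v z : R) :
  first_moment mu -> first_moment nu -> cx_le mu nu ->
  quantile_fun mu G ->
  0 < u -> u < v -> v < 1 ->
  conv_env (Eu mu nu G u) z = conv_env (Eu mu nu G v) z ->
  conv_env (Eu mu nu G v) z = (Eu mu nu G u z)%:E ->
  forall x : R, x <= z ->
    conv_env (Eu mu nu G u) x = conv_env (Eu mu nu G v) x.
Proof.
move=> fmu fnu cx hq u0 uv v1 H1 H2 x xz.
have [Q [Q0 [Qm QE]]] := @decomp R mu G u v fmu hq u0 uv v1.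
have D k : Eu mu nu G u k - Eu mu nu G v k = Q k.
  by rewrite /Eu QE; ring.
have Fz : Eu mu nu G u z <= Eu mu nu G v z.
  by have := @conv_env_le R (Eu mu nu G v) z; rewrite H2 lee_fin.
have EQ y : y <= z -> Eu mu nu G u y = Eu mu nu G v y.
  move=> yz; have := Qm y z yz; have := Q0 y; have := D y; have := D z; lra.
apply/eqP; rewrite eq_le; apply/andP; split.
  exact: (@key R (Eu mu nu G u) (Eu mu nu G v) z x EQ H2 xz).
apply: (@key R (Eu mu nu G v) (Eu mu nu G u) z x) => //.
  by move=> y yz; rewrite EQ.
by rewrite H1 H2 EQ.
Qed.
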